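(* Let $X$ be a topological space and let $\mathcal C=\mathcal C(\mathcal A)$ be the epireflective subcategory of $\mathbf{Top}$ generated by a family of spaces $\mathcal A$. For a subset $A$ of $X$ the following are equivalent: (a) $A$ is $\mathcal C$-open (resp. $\mathcal C$-closed); (b) $A=\mathrm{r}_{(X,\mathcal C)}^{-1}(U)$ for some open (resp. closed) subset $U$ of $\mathrm{r}_{\mathcal C}X$; (c) $A$ is $\mathcal A$-open (resp. $\mathcal A$-closed).
   Context: $\mathcal C(\mathcal A)$ is the class of spaces homeomorphic to subspaces of products of spaces in $\mathcal A$; it is epireflective: each space $X$ has a reflection $\mathrm{r}_{\mathcal C}X\in\mathcal C$ with a continuous surjection $\mathrm{r}_{(X,\mathcal C)}\colon X\to\mathrm{r}_{\mathcal C}X$ through which every continuous map from $X$ into a space of $\mathcal C$ factors uniquely. For a class $\mathcal B$ of spaces, a subset of $X$ is a $\mathcal B$-oset if it equals $f^{-1}(U)$ for some continuous $f\colon X\to Y$ with $Y\in\mathcal B$ and $U$ open in $Y$; the members of the topology generated by the $\mathcal B$-osets (as a subbase) are the $\mathcal B$-open sets, and complements of $\mathcal B$-open sets are $\mathcal B$-closed. *)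

(* Defs.v *)
From HB Require Import structures.
From mathcomp Require Import all_boot all_order all_algebra.
From mathcomp Require Import all_classical all_reals all_analysis.
Set Implicit Arguments. Unset Strict Implicit. Unset Printing Implicit Defensive.
Local Open Scope classical_set_scope.

Definition space_class := topologicalType -> Prop.

(* e : X -> Y is a homeomorphism of X onto the subspace e(X) of Y:
   injective, continuous, and every open set of X is the trace (preimage)
   of an open set of Y. *)
Definition embedding (X Y : topologicalType) (e : X -> Y) : Prop :=
  injective e /\ continuous e /\
  (forall U : set X, open U -> exists V : set Y, open V /\ U = e @^-1` V).

(* C(A): spaces homeomorphic to subspaces of products of spaces in A. *)
Definition gen_class (A : space_class) : space_class := fun X =>
  exists (I : Type) (T : I -> topologicalType) (e : X -> prod_topology T),
    (forall i, A (T i)) /\ embedding e.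

Definition is_reflection (C : space_class) (X Y : topologicalType)
    (r : X -> Y) : Prop :=
  C Y /\ continuous r /\ (forall y : Y, exists x : X, r x = y) /\
  forall (Z : topologicalType), C Z -> forall f : X -> Z, continuous f ->
    exists g : Y -> Z, continuous g /\ g \o r = f /\
      forall g' : Y -> Z, continuous g' -> g' \o r = f -> g' = g.

Definition oset (B : space_class) (X : topologicalType) (S : set X) : Prop :=
  exists (Y : topologicalType) (f : X -> Y) (U : set Y),
    B Y /\ continuous f /\ open U /\ S = f @^-1` U.

Definition is_topology (X : Type) (O : set (set X)) : Prop :=
  O setT /\ (forall U V, O U -> O V -> O (U `&` V)) /\
  (forall G : set (set X), G `<=` O -> O (\bigcup_(U in G) U)).

Definition generated_open (X : Type) (Sb : set (set X)) (S : set X) : Prop :=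
  forall O : set (set X), is_topology O -> Sb `<=` O -> O S.

Definition B_open (B : space_class) (X : topologicalType) (S : set X) : Prop :=
  generated_open (@oset B X) S.

Definition B_closed (B : space_class) (X : topologicalType) (S : set X) : Prop :=
  B_open B (~` S).

(* Main.v *)
Require Import Defs.
From HB Require Import structures.
From mathcomp Require Import all_boot all_order all_algebra.
From mathcomp Require Import all_classical all_reals all_analysis.
From mathcomp Require Import finmap.
Local Open Scope classical_set_scope.

Lemma topo_bigcap (Z : Type) (O : set (set Z)) (K : eqType) (s : seq K) (f : K -> set Z) :
  is_topology O -> (forall k, k \in s -> O (f k)) ->
  O (\bigcap_(k in [set x | x \in s]) f k).
Proof.
move=> [OT [OI OU]]; elim: s => [|a s IH] H.
  have -> : \bigcap_(k in [set x | x \in [::]]) f k = setT.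
    by apply/seteqP; split => // x _ k.
  exact: OT.
have -> : \bigcap_(k in [set x | x \in a :: s]) f k =
   f a `&` \bigcap_(k in [set x | x \in s]) f k.
  apply/seteqP; split => x /=.
    move=> Hx; split; first by apply: Hx; rewrite /= inE eqxx.
    by move=> k ks; apply: Hx; rewrite /= inE ks orbT.
  by move=> [Ha Hs] k; rewrite /= inE => /orP [/eqP ->|/Hs].
apply: OI; first by apply: H; rewrite inE eqxx.
by apply: IH => k ks; apply: H; rewrite inE ks orbT.
Qed.

Lemma topo_bigcap_fset (Z : Type) (O : set (set Z)) (K : choiceType) (F : {fset K}) (f : K -> set Z) :
  is_topology O -> (forall k, k \in F -> O (f k)) ->
  O (\bigcap_(k in [set` F]) f k).
Proof.
move=> tO H.
have -> : [set` F] = [set x | x \in enum_fset F] by [].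
exact: topo_bigcap.
Qed.

Lemma topo_bigcup (Z : Type) (O : set (set Z)) (K : Type) (P : set K) (F : K -> set Z) :
  is_topology O -> (forall k, P k -> O (F k)) -> O (\bigcup_(k in P) F k).
Proof.
move=> [_ [_ OU]] H.
have -> : \bigcup_(k in P) F k = \bigcup_(U in F @` P) U.
  by apply/seteqP; split => x; [move=> [k Pk Fx]; exists (F k) => //; exists k|
    move=> [_ [k Pk <-] Fx]; exists k].
by apply: OU => _ [k Pk <-]; apply: H.
Qed.

Lemma prod_open_ind (Z : Type) (O : set (set Z)) (I : Type)
  (T : I -> topologicalType) (g : Z -> prod_topology T) :
  is_topology O ->
  (forall i (U : set (T i)), open U -> O ((fun z => g z i) @^-1` U)) ->
  forall W : set (prod_topology T), open W -> O (g @^-1` W).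
Proof.
move=> tO H W.
move=> [D' sD' <-].
rewrite preimage_bigcup; apply: topo_bigcup => // B /sD' [F sF <-].
rewrite preimage_bigcap.
apply: (@topo_bigcap_fset _ _ _ F (fun i => g @^-1` i) tO) => j /sF /set_mem [k _ [U oU <-]].
exact: H.
Qed.

Lemma cyl_open (I : Type) (T : I -> topologicalType) (i : I) (U : set (T i)) :
  open U -> @open (prod_topology T) ((fun f : prod_topology T => f i) @^-1` U).
Proof.
move=> oU.
set B := (fun f : prod_topology T => f i) @^-1` U.
exists [set B]; last first.
  by rewrite predeqE => ?; split=> [[_ ->]|] //; exists B.
move=> _ ->; exists [fset B]%fset.
  by move=> ?; rewrite inE => /eqP->; apply/mem_set; exists i => //; exists U.
apply/seteqP; split=> x /=.
  by apply; rewrite /= inE.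
by move=> Bx j; rewrite /= inE => /eqP->.
Qed.

Lemma open_topo (Z : topologicalType) : is_topology (@open Z).
Proof.
split; first exact: openT.
split; first by move=> U V; apply: openI.
by move=> G hG; apply: bigcup_open.
Qed.

Lemma proj_cont (I : Type) (T : I -> topologicalType) (i : I) :
  continuous (fun f : prod_topology T => f i).
Proof. by apply/continuousP => U oU; apply: cyl_open. Qed.

Lemma gen_topo (Z : Type) (Sb : set (set Z)) : is_topology (generated_open Sb).
Proof.
split; first by move=> O [OT _] _.
split; first by move=> U V hU hV O tO sb; case: (tO) => _ [OI _]; apply: OI; [apply: hU|apply: hV].
by move=> G hG O tO sb; case: (tO) => _ [_ OU]; apply: OU => U GU; apply: hG.
Qed.

Lemma gen_sub (Z : Type) (Sb : set (set Z)) : Sb `<=` generated_open Sb.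
Proof. by move=> S hS O _ sb; apply: sb. Qed.

Lemma gen_least (Z : Type) (Sb O : set (set Z)) :
  is_topology O -> Sb `<=` O -> generated_open Sb `<=` O.
Proof. by move=> tO sb S hS; apply: hS. Qed.

Lemma gen_mono (Z : Type) (Sb1 Sb2 : set (set Z)) :
  Sb1 `<=` generated_open Sb2 -> generated_open Sb1 `<=` generated_open Sb2.
Proof. by move=> h; apply: gen_least; [apply: gen_topo|]. Qed.

Lemma A_in_C (A : space_class) (Z : topologicalType) : A Z -> gen_class A Z.
Proof.
move=> AZ; exists unit, (fun _ => Z), (fun z => fun _ => z); split => //.
split; first by move=> x y /(congr1 (fun f => f tt)).
split.
  apply/continuousP => W oW.
  exact: (@prod_open_ind Z (@open Z) unit (fun _ => Z) (fun z => fun _ => z) (open_topo Z) (fun i U oU => oU) W oW).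
move=> U oU; exists ((fun f : prod_topology (fun _ : unit => Z) => f tt) @^-1` U).
by split => //; apply: cyl_open.
Qed.

Lemma main_open (A : space_class) (X Y : topologicalType) (r : X -> Y)
  (hr : is_reflection (gen_class A) r) (S : set X) :
  (B_open (gen_class A) S <-> exists U : set Y, open U /\ S = r @^-1` U) /\
  (B_open (gen_class A) S <-> B_open A S).
Proof.
have [CY [cr [_ fact]]] := hr.
split; split.
- apply: (@gen_least X _ [set S | exists U : set Y, open U /\ S = r @^-1` U]).
    split; first by exists setT; split; [exact: openT|rewrite preimage_setT].
    split.
      move=> P Q [U1 [oU1 e1]] [U2 [oU2 e2]]; rewrite e1 e2; exists (U1 `&` U2); split;
        [exact: openI|by rewrite preimage_setI].
    move=> G hG; exists (\bigcup_(U in [set U | open U /\ G (r @^-1` U)]) U).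
    split; first by apply: bigcup_open => U [].
    apply/seteqP; split => x.
      move=> [T GT Tx]; have [U [oU eT]] := hG T GT.
      by exists U; [split => //; rewrite -eT|rewrite eT in Tx].
    by move=> [U [oU GU] rxU]; exists (r @^-1` U).
  move=> _ [Z [f [V [CZ [cf [oV ->]]]]]].
  have [g [cg [gr _]]] := fact Z CZ f cf.
  exists (g @^-1` V); split; first exact: (continuousP _).1 cg _ oV.
  by rewrite -gr.
- by move=> [U [oU ->]]; apply: gen_sub; exists Y, r, U.
- apply: gen_mono.
  move=> _ [Z [f [V [[I [T [e [hA [ie [ce oe]]]]]] [cf [oV ->]]]]]].
  have [W [oW ->]] := oe V oV.
  change (B_open A ((e \o f) @^-1` W)).
  apply: (@prod_open_ind X _ I T (e \o f) (@gen_topo X (@oset A X)) _ W oW) => i U oU.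
  apply: gen_sub; exists (T i), (fun x => e (f x) i), U.
  split => //; split => //.
  apply/continuousP => U' oU'.
  have o1 := (continuousP _).1 (@proj_cont I T i) _ oU'.
  have o2 := (continuousP _).1 ce _ o1.
  exact: (continuousP _).1 cf _ o2.
- apply: gen_mono.
  move=> _ [Z [f [V [AZ [cf [oV ->]]]]]].
  by apply: gen_sub; exists Z, f, V; split => //; apply: A_in_C.
Qed.

Theorem lemma5p3 (A : space_class) (X Y : topologicalType) (r : X -> Y)
  (hr : is_reflection (gen_class A) r) (S : set X) :
  ((B_open (gen_class A) S <-> exists U : set Y, open U /\ S = r @^-1` U) /\
   (B_open (gen_class A) S <-> B_open A S)) /\
  ((B_closed (gen_class A) S <-> exists U : set Y, closed U /\ S = r @^-1` U) /\
   (B_closed (gen_class A) S <-> B_closed A S)).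
Proof.
split; first exact: main_open.
have [h1 h2] := @main_open A X Y r hr (~` S).
split; last exact: h2.
rewrite /B_closed h1; split.
  move=> [U [oU eU]]; exists (~` U); split; first exact: open_closedC.
  by rewrite -[S]setCK eU preimage_setC.
move=> [U [cU ->]]; exists (~` U); split; first exact: closed_openC.
by rewrite preimage_setC.
Qed.
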